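(* Consider a credit-attribution game in which every paper has exactly two authors, and the fractional attack model on player $x$ in the reliability extension of the full obligation game $\Gamma_{FO}$, with fixed $p_x\in[0,1]$, baseline reliabilities $p^*_l\in(0,1]$, cost slopes $L_l,R_l>0$ and budget $B\ge0$. Then the following profile is an optimal attack: sort the coauthors $l\in CA(x)$ in decreasing order of $C(x,l)/L_l$ (ties broken arbitrarily); for $i=1,\dots,|CA(x)|$ in turn, decrease the reliability of the $i$-th coauthor to $0$ while the remaining budget allows it; when the remaining budget does not allow decreasing it to $0$, decrease it as much as the remaining budget allows; leave all other reliabilities at their baseline values.
   Context: Credit-attribution game: authors $N=\{1,\dots,n\}$, papers $P_k$ with author sets $Auth_k$ and weights $w_k\in\mathbb{R}_+$. $CA(x)$ is the set of coauthors of $x$; for $l\in CA(x)$, $C(x,l)=\sum w_k$ over papers authored by both $x$ and $l$. $v_{FO}(S)=\sum\{w_k:Auth_k\subseteq S\}$. For $T\subseteq S$, $\Pi_{T,S}=\prod_{i\in T}p_i\prod_{i\in S\setminus T}(1-p_i)$; reliability extension $\overline v(S)=\sum_{T\subseteq S}v(T)\Pi_{T,S}$. Shapley value $Sh[v](x)=\frac1{n!}\sum_\pi[v(S^x_\pi\cup\{x\})-v(S^x_\pi)]$, $S^x_\pi$ the players preceding $x$ in $\pi$. Fractional attack on $x$: $p_x$ fixed; for each $j\ne x$ choose $p_j\in[0,1]$ at cost $u_j(p_j)=L_j(p^*_j-p_j)$ if $p_j<p^*_j$, $R_j(p_j-p^*_j)$ if $p_j\ge p^*_j$; feasible if $\sum_{j\ne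 x}u_j(p_j)\le B$; an optimal attack is a feasible profile minimizing $Sh[\overline{v_{FO}}](x)$. *)

(* Defs.v *)
From HB Require Import structures.
From mathcomp Require Import all_boot all_order all_algebra all_fingroup.
From mathcomp Require Import reals.
Set Implicit Arguments. Unset Strict Implicit. Unset Printing Implicit Defensive.
Import Order.TTheory GRing.Theory Num.Theory.
Local Open Scope ring_scope.

Section CreditAttribution.
Variables (R : realType) (n m : nat).
(* authors are 'I_n, papers are 'I_m *)
Variables (Auth : 'I_m -> {set 'I_n}) (w : 'I_m -> R).

Definition vFO (S : {set 'I_n}) : R := \sum_(k : 'I_m | Auth k \subset S) w k.

Definition PiTS (p : 'I_n -> R) (T S : {set 'I_n}) : R :=
  (\prod_(i in T) p i) * \prod_(i in S :\: T) (1 - p i).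

Definition rel_ext (v : {set 'I_n} -> R) (p : 'I_n -> R) (S : {set 'I_n}) : R :=
  \sum_(T : {set 'I_n} | T \subset S) v T * PiTS p T S.

(* players preceding x in the ordering pi (pi y = position of player y) *)
Definition preceding (pi : {perm 'I_n}) (x : 'I_n) : {set 'I_n} :=
  [set y | pi y < pi x]%N.

Definition shapley (v : {set 'I_n} -> R) (x : 'I_n) : R :=
  (n`!%:R)^-1 * \sum_(pi : {perm 'I_n})
     (v (x |: preceding pi x) - v (preceding pi x)).

Definition coauthors (x : 'I_n) : {set 'I_n} :=
  [set l | (l != x) && [exists k : 'I_m, (x \in Auth k) && (l \in Auth k)]].

Definition Cxl (x l : 'I_n) : R :=
  \sum_(k : 'I_m | (x \in Auth k) && (l \in Auth k)) w k.

Variables (pstar L Rs : 'I_n -> R).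

Definition cost (j : 'I_n) (pj : R) : R :=
  if pj < pstar j then L j * (pstar j - pj) else Rs j * (pj - pstar j).

Definition feasible (x : 'I_n) (px B : R) (p : 'I_n -> R) : Prop :=
  p x = px /\ (forall j, j != x -> 0 <= p j <= 1) /\
  \sum_(j : 'I_n | j != x) cost j (p j) <= B.

Definition attack_value (x : 'I_n) (p : 'I_n -> R) : R :=
  shapley (rel_ext vFO p) x.

Definition optimal_attack (x : 'I_n) (px B : R) (p : 'I_n -> R) : Prop :=
  feasible x px B p /\
  forall q, feasible x px B q -> attack_value x p <= attack_value x q.

Definition upd (p : 'I_n -> R) (l : 'I_n) (a : R) : 'I_n -> R :=
  fun j => if j == l then a else p j.

Fixpoint greedy_aux (b : R) (s : seq 'I_n) (p : 'I_n -> R) : 'I_n -> R :=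
  match s with
  | [::] => p
  | l :: s' =>
      if L l * pstar l <= b then greedy_aux (b - L l * pstar l) s' (upd p l 0)
      else upd p l (pstar l - b / L l)
  end.

Definition baseline (x : 'I_n) (px : R) : 'I_n -> R :=
  fun j => if j == x then px else pstar j.

Definition greedy_profile (x : 'I_n) (px B : R) (s : seq 'I_n) : 'I_n -> R :=
  greedy_aux B s (baseline x px).

End CreditAttribution.

(* Main.v *)
Require Import Defs.
From HB Require Import structures.
From mathcomp Require Import all_boot all_order all_algebra all_fingroup.
From mathcomp Require Import reals.
From mathcomp Require Import ring lra.
Import Order.TTheory GRing.Theory Num.Theory.
Local Open Scope ring_scope.

Section K.
Variables (R : realType) (n : nat) (pstar L Rs : 'I_n -> R).

Lemma greedy_notin b s p j : j \notin s -> greedy_aux pstar L b s p j = p j.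
Proof.
elim: s b p => [|l s IH] b p //=; rewrite inE negb_or => /andP[jl js].
case: ifP => _; first by rewrite IH // /upd (negbTE jl).
by rewrite /upd (negbTE jl).
Qed.

Lemma item_le (C : R) k y rho : 0 < L k -> 0 <= C -> 0 <= Rs k -> 0 <= rho ->
  C / L k <= rho -> C * (pstar k - y) <= rho * cost pstar L Rs k y.
Proof.
move=> Lp C0 R0 r0 hr.
have h : C <= rho * L k by rewrite -ler_pdivrMr.
rewrite /cost; case: ifP => hy.
  have d0 : 0 <= pstar k - y by rewrite subr_ge0 ltW.
  by rewrite mulrA; apply: ler_wpM2r.
have d0 : pstar k - y <= 0 by rewrite subr_le0 leNgt hy.
have d1 : 0 <= y - pstar k by rewrite subr_ge0 leNgt hy.
apply: (@le_trans _ _ 0); first by rewrite mulr_ge0_le0.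
by rewrite !mulr_ge0.
Qed.

Lemma drop_le (C : R) k y rho : 0 < L k -> 0 <= C -> 0 <= Rs k -> 0 <= rho ->
  rho <= C / L k -> 0 <= y -> 0 <= pstar k ->
  C * (0 - y) <= rho * (cost pstar L Rs k y - L k * pstar k).
Proof.
move=> Lp C0 R0 r0 hr y0 p0.
have h : rho * L k <= C by rewrite -ler_pdivlMr.
rewrite /cost; case: ifP => hy.
  have -> : rho * (L k * (pstar k - y) - L k * pstar k) = - ((rho * L k) * y) by ring.
  by rewrite sub0r mulrN lerN2; apply: ler_wpM2r.
have hp : pstar k <= y by rewrite leNgt hy.
have a1 : 0 <= rho * (Rs k * (y - pstar k)) by rewrite !mulr_ge0 // subr_ge0.
have a2 : rho * L k * pstar k <= C * pstar k by apply: ler_wpM2r.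
have a3 : C * pstar k <= C * y by apply: ler_wpM2l.
have -> : rho * (Rs k * (y - pstar k) - L k * pstar k) = rho * (Rs k * (y - pstar k)) - rho * L k * pstar k by ring.
rewrite sub0r mulrN; lra.
Qed.
End K.

Section K2.
Variables (R : realType) (n : nat) (pstar L Rs : 'I_n -> R).

Lemma key (C q : 'I_n -> R) s :
  uniq s -> sorted (fun a b => C b / L b <= C a / L a) s ->
  (forall l, l \in s -> [/\ 0 < L l, 0 <= C l, 0 < pstar l, 0 <= Rs l & 0 <= q l]) ->
  forall b p M, 0 <= b -> (forall l, l \in s -> p l = pstar l) -> 0 <= M ->
  (forall l, l \in s -> C l / L l <= M) ->
  exists rho, [/\ 0 <= rho, rho <= M &
    \sum_(l <- s) C l * (greedy_aux pstar L b s p l - q l)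
      <= rho * (\sum_(l <- s) cost pstar L Rs l (q l) - b)].
Proof.
elim: s => [|l s IH] /=.
  move=> _ _ _ b p M b0 _ M0 _; exists 0; split => //.
  by rewrite !big_nil mul0r.
move=> /andP[ls us] srt H b p M b0 hp M0 hM.
have srt' := path_sorted srt.
have tr : transitive (fun a b : 'I_n => C b / L b <= C a / L a).
  by move=> y x z /= h1 h2; apply: le_trans h2 h1.
have hall := order_path_min tr srt.
have [Ll Cl pl Rl ql] := H l (mem_head _ _).
have rl0 : 0 <= C l / L l by rewrite divr_ge0 // ltW.
have H' : forall k, k \in s -> [/\ 0 < L k, 0 <= C k, 0 < pstar k, 0 <= Rs k & 0 <= q k].
  by move=> k ks; apply: H; rewrite inE ks orbT.
case: ifP => hb.
  have b1 : 0 <= b - L l * pstar l by rewrite subr_ge0.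
  have hp' : forall k, k \in s -> upd p l 0 k = pstar k.
    move=> k ks; rewrite /upd; case: eqP => [e|_]; first by rewrite -e ks in ls.
    by apply: hp; rewrite inE ks orbT.
  have [rho [r0 rM hr]] := IH us srt' H' _ _ _ b1 hp' rl0 (fun k ks => (allP hall) k ks).
  exists rho; split => //; first by apply: le_trans rM (hM l (mem_head _ _)).
  rewrite !big_cons greedy_notin // /upd eqxx.
  have := @drop_le R n pstar L Rs (C l) l (q l) rho Ll Cl Rl r0 rM ql (ltW pl).
  move: hr; rewrite /upd; lra.
exists (C l / L l); split => //; first by apply: hM; rewrite mem_head.
rewrite !big_cons /upd eqxx.
rewrite (eq_big_seq (fun k => C k * (pstar k - q k))); last first.
  move=> k ks /=; case: eqP => [e|_]; first by rewrite -e ks in ls.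
  by rewrite hp // inE ks orbT.
have h1 : \sum_(k <- s) C k * (pstar k - q k) <=
          C l / L l * \sum_(k <- s) cost pstar L Rs k (q k).
  rewrite mulr_sumr big_seq [X in _ <= X]big_seq; apply: ler_sum => k ks.
  have [Lk Ck pk Rk qk] := H' k ks.
  by apply: (@item_le R n pstar L Rs) => //; apply: (allP hall).
have h2 := @item_le R n pstar L Rs (C l) l (q l) _ Ll Cl Rl rl0 (lexx _).
have e : C l * (pstar l - b / L l - q l) = C l * (pstar l - q l) - C l * (b / L l).
  by rewrite -mulrBr; congr (_ * _); rewrite addrAC.
rewrite e.
have h3 : C l * (b / L l) = C l / L l * b by rewrite mulrA mulrAC.
rewrite h3 mulrBr mulrDr; lra.
Qed.

Lemma greedy_cost s :
  uniq s -> (forall l, l \in s -> 0 < L l /\ 0 < pstar l /\ 0 < Rs l) ->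
  forall b p, 0 <= b -> (forall l, l \in s -> p l = pstar l) ->
  \sum_(l <- s) cost pstar L Rs l (greedy_aux pstar L b s p l) <= b.
Proof.
elim: s => [|l s IH] /=; first by move=> _ _ b p b0 _; rewrite big_nil.
move=> /andP[ls us] H b p b0 hp.
have [Ll [pl Rl]] := H l (mem_head _ _).
have H' : forall k, k \in s -> 0 < L k /\ 0 < pstar k /\ 0 < Rs k.
  by move=> k ks; apply: H; rewrite inE ks orbT.
case: ifP => hb.
  have b1 : 0 <= b - L l * pstar l by rewrite subr_ge0.
  have hp' : forall k, k \in s -> upd p l 0 k = pstar k.
    move=> k ks; rewrite /upd; case: eqP => [e|_]; first by rewrite -e ks in ls.
    by apply: hp; rewrite inE ks orbT.
  have := IH us H' _ _ b1 hp'.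
  rewrite big_cons greedy_notin // /upd eqxx /cost pl subr0; lra.
rewrite big_cons /upd eqxx.
rewrite (eq_big_seq (fun k => 0)); last first.
  move=> k ks /=; case: eqP => [e|_]; first by rewrite -e ks in ls.
  by rewrite hp ?inE ?ks ?orbT // /cost ltxx subrr mulr0.
rewrite big1_eq addr0 /cost; case: ifP => h.
  by rewrite opprB addrC subrK mulrCA mulfV ?mulr1 // gt_eqF.
have : pstar l - b / L l - pstar l <= 0.
  by rewrite addrC addKr oppr_le0 divr_ge0 // ltW.
move=> h4; apply: le_trans b0; rewrite mulr_ge0_le0 // ltW //.
Qed.
End K2.

Section K3.
Variables (R : realType) (n : nat) (pstar L : 'I_n -> R).

Lemma greedy_bounds s :
  (forall l, l \in s -> 0 < L l /\ 0 < pstar l <= 1) ->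
  forall b p, 0 <= b -> (forall j, 0 <= p j <= 1) ->
  forall j, 0 <= greedy_aux pstar L b s p j <= 1.
Proof.
elim: s => [|l s IH] /= H b p b0 hp j; first exact: hp.
have [Ll /andP[pl p1]] := H l (mem_head _ _).
have H' : forall k, k \in s -> 0 < L k /\ 0 < pstar k <= 1.
  by move=> k ks; apply: H; rewrite inE ks orbT.
case: ifP => hb.
  apply: IH => //; first by rewrite subr_ge0.
  by move=> i; rewrite /upd; case: ifP => _ //; rewrite lexx ler01.
rewrite /upd; case: ifP => _ //.
have h1 : b / L l < pstar l.
  by rewrite ltr_pdivrMr // mulrC ltNge hb.
have h2 : 0 <= b / L l by rewrite divr_ge0 // ltW.
apply/andP; split; lra.
Qed.
End K3.

Section G.
Variables (R : realType) (n : nat).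

Lemma count_half (x y : 'I_n) : x != y ->
  \sum_(pi : {perm 'I_n}) (if (pi y < pi x)%N then 1 else 0 : R) = n`!%:R / 2.
Proof.
move=> xy.
set h := fun pi : {perm 'I_n} => (pi * tperm (pi x) (pi y))%g.
have hK : involutive h.
  move=> pi; rewrite /h !permM tpermL tpermR tpermC -mulgA tperm2 mulg1 //.
have e1 : \sum_(pi : {perm 'I_n}) (if (pi y < pi x)%N then 1 else 0 : R) =
          \sum_(pi : {perm 'I_n}) (if (pi x < pi y)%N then 1 else 0 : R).
  rewrite (reindex_inj (inv_inj hK)) /=; apply: eq_bigr => pi _.
  by rewrite /h !permM tpermL tpermR.
have e2 : \sum_(pi : {perm 'I_n}) (if (pi y < pi x)%N then 1 else 0 : R) +
          \sum_(pi : {perm 'I_n}) (if (pi x < pi y)%N then 1 else 0 : R) = n`!%:R.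
  rewrite -big_split /=.
  rewrite (eq_bigr (fun _ => 1)); last first.
    move=> pi _; have : pi x != pi y by rewrite (inj_eq perm_inj).
    by case: ltngtP => //; rewrite ?addr0 ?add0r // => /val_inj ->; rewrite eqxx.
  by rewrite sumr_const card_Sn.
rewrite -e1 in e2; rewrite -e2; by field.
Qed.

Lemma unan_rel (p : 'I_n -> R) (A S : {set 'I_n}) : A \subset S ->
  \sum_(T : {set 'I_n} | T \subset S) (if A \subset T then PiTS p T S else 0)
  = \prod_(i in A) p i.
Proof.
move=> AS.
pose F i := if i \in S then p i else 0.
pose G i := if i \in S then (if i \in A then 0 else 1 - p i) else 1.
rewrite big_mkcond [RHS]big_mkcond /=.
rewrite (eq_bigr (fun i => F i + G i)); last first.
  move=> i _; rewrite /F /G; case iA: (i \in A).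
    by rewrite (subsetP AS i iA) addr0.
  by case: (i \in S); rewrite ?add0r // addrC subrK.
rewrite (@bigA_distr R 0 1 *%R +%R) /=; apply: eq_bigr => J _.
case: (boolP (J \subset S)) => JS; last first.
  have [i iJ iS] := subsetPn JS.
  by rewrite (bigD1 i) //= iJ /F (negbTE iS) mul0r.
case: (boolP (A \subset J)) => AJ; last first.
  have [i iA iJ] := subsetPn AJ.
  by rewrite (bigD1 i) //= (negbTE iJ) /G (subsetP AS i iA) iA mul0r.
rewrite /PiTS !(big_mkcond (fun i => i \in _)) -big_split /=.
apply: eq_bigr => i _; rewrite /F /G !inE.
have := subsetP JS i; have := subsetP AJ i.
case: (i \in J); case: (i \in A); case: (i \in S) => //= h1 h2; rewrite ?mulr1 ?mul1r //; by [have := h1 isT | have := h2 isT].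
Qed.

Variables (m : nat) (Auth : 'I_m -> {set 'I_n}) (w : 'I_m -> R).

Lemma rel_vFO (p : 'I_n -> R) (S : {set 'I_n}) :
  rel_ext (vFO Auth w) p S =
  \sum_k (if Auth k \subset S then w k * \prod_(i in Auth k) p i else 0).
Proof.
rewrite /rel_ext /vFO.
under eq_bigr do rewrite big_distrl big_mkcond /=.
rewrite exchange_big /=; apply: eq_bigr => k _.
case: ifP => AS.
  rewrite -(@unan_rel p _ _ AS) mulr_sumr; apply: eq_bigr => T _.
  by case: ifP; rewrite ?mulr0.
apply: big1 => T TS; rewrite ifF //; apply/negbTE; apply: contraFN AS => AT.
exact: subset_trans AT TS.
Qed.

Lemma two_elem (A : {set 'I_n}) x : #|A| = 2%N -> x \in A ->
  exists y, y != x /\ A :\ x = [set y].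
Proof.
move=> cA xA; move: cA; rewrite (cardsD1 x) xA add1n => [[c1]].
have /cards1P [y e] : #|A :\ x| == 1%N by rewrite c1.
exists y; split => //.
have : y \in A :\ x by rewrite e set11.
by rewrite !inE => /andP[].
Qed.

Lemma shapley_formula (v : {set 'I_n} -> R) (c : 'I_m -> R) x :
  (forall k, #|Auth k| = 2%N) ->
  (forall S, v S = \sum_k (if Auth k \subset S then c k else 0)) ->
  shapley v x = \sum_k (if x \in Auth k then c k / 2 else 0).
Proof.
move=> hA hv; rewrite /shapley.
under eq_bigr do rewrite !hv -sumrB.
rewrite exchange_big mulr_sumr; apply: eq_bigr => k _.
case: (boolP (x \in Auth k)) => xA.
  have [y [yx Ay]] := @two_elem _ _ (hA k) xA.
  rewrite (eq_bigr (fun pi : {perm 'I_n} => c k * (if (pi y < pi x)%N then 1 else 0))).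
    rewrite -mulr_sumr count_half; last by rewrite eq_sym.
    have nz : (n`!%:R : R) != 0 by rewrite pnatr_eq0 -lt0n fact_gt0.
    by field.
  move=> pi _.
  have -> : (Auth k \subset preceding pi x) = false.
    apply/negbTE/negP => /subsetP/(_ x xA); by rewrite inE ltnn.
  rewrite -subDset Ay sub1set !inE subr0.
  by case: ifP; rewrite ?mulr1 ?mulr0.
rewrite big1 ?mulr0 // => pi _.
have e : Auth k :\ x = Auth k.
  apply/setP => i; rewrite !inE; case: eqP => // ->; by rewrite (negbTE xA).
by rewrite -subDset e subrr.
Qed.

Lemma ca_formula (p : 'I_n -> R) x :
  (forall k, #|Auth k| = 2%N) ->
  \sum_k (if x \in Auth k then w k * \prod_(i in Auth k) p i / 2 else 0) =
  p x / 2 * \sum_(l in coauthors Auth x) Cxl Auth w x l * p l.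
Proof.
move=> hA; rewrite /Cxl.
under [in RHS]eq_bigr do rewrite big_distrl big_mkcond /=.
rewrite exchange_big mulr_sumr /=; apply: eq_bigr => k _.
case: (boolP (x \in Auth k)) => xA /=; last first.
  by rewrite big1 ?mulr0 // => l _; rewrite (negbTE xA).
have [y [yx Ay]] := @two_elem _ _ (hA k) xA.
have yA : y \in Auth k.
  have : y \in Auth k :\ x by rewrite Ay set11.
  by rewrite !inE => /andP[].
have yCA : y \in coauthors Auth x.
  rewrite inE yx /=; apply/existsP; exists k; by rewrite xA yA.
rewrite [in RHS](bigD1 y) //= yA [X in _ = _ * (_ + X)]big1 ?addr0; last first.
  move=> l /andP[lCA ly]; case: ifP => // lA; exfalso.
  move: lCA; rewrite inE => /andP[lx _].
  have : l \in Auth k :\ x by rewrite !inE lx.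
  by rewrite Ay inE (negbTE ly).
rewrite (bigD1 x) //= (eq_bigl (fun i => i \in [set y])); last first.
  by move=> i; rewrite -Ay !inE andbC.
rewrite big_set1; ring.
Qed.
End G.

Theorem theorem10 (R : realType) (n m : nat)
  (Auth : 'I_m -> {set 'I_n}) (w : 'I_m -> R)
  (pstar L Rs : 'I_n -> R) (x : 'I_n) (px B : R) (s : seq 'I_n) :
  (forall k, #|Auth k| = 2%N) ->
  (forall k, 0 <= w k) ->
  0 <= px <= 1 ->
  (forall j, j != x -> 0 < pstar j <= 1) ->
  (forall j, j != x -> 0 < L j) ->
  (forall j, j != x -> 0 < Rs j) ->
  0 <= B ->
  (* s lists the coauthors of x in decreasing order of C(x,l)/L_l *)
  uniq s ->
  (forall l, (l \in s) = (l \in coauthors Auth x)) ->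
  sorted (fun a b => Cxl Auth w x b / L b <= Cxl Auth w x a / L a) s ->
  optimal_attack Auth w pstar L Rs x px B (greedy_profile pstar L x px B s).
Proof.
move=> hA hw hpx hp hL hRs hB us hs srt.
have caNx : forall j, j \in coauthors Auth x -> j != x.
  by move=> j; rewrite inE => /andP[].
have xs : x \notin s by rewrite hs inE eqxx.
have sx : forall l, l \in s -> l != x by move=> l; rewrite hs; apply: caNx.
have hbase : forall l, l \in s -> baseline pstar x px l = pstar l.
  by move=> l ls; rewrite /baseline (negbTE (sx l ls)).
have gx : greedy_profile pstar L x px B s x = px.
  by rewrite /greedy_profile greedy_notin // /baseline eqxx.
have gout : forall j, j != x -> j \notin s -> greedy_profile pstar L x px B s j = pstar j.
  by move=> j jx js; rewrite /greedy_profile greedy_notin // /baseline (negbTE jx).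
have sumS : forall F : 'I_n -> R, \sum_(j <- s) F j = \sum_(j in coauthors Auth x) F j.
  by move=> F; rewrite big_uniq //; apply: eq_bigl => j; rewrite /= hs.
have split : forall F : 'I_n -> R, \sum_(j | j != x) F j =
    \sum_(j in coauthors Auth x) F j + \sum_(j | (j != x) && (j \notin coauthors Auth x)) F j.
  move=> F; rewrite (bigID (fun j => j \in coauthors Auth x)) /=; congr (_ + _).
  apply: eq_bigl => j /=; case: (boolP (j \in coauthors Auth x)) => h.
    by rewrite andbT caNx.
  by rewrite andbF.
have cost0 : forall j y, j != x -> 0 <= cost pstar L Rs j y.
  move=> j y jx; rewrite /cost; case: ifP => h.
    by rewrite mulr_ge0 ?(ltW (hL j jx)) // subr_ge0 ltW.
  by rewrite mulr_ge0 ?(ltW (hRs j jx)) // subr_ge0 leNgt h.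
have Hs : forall l, l \in s -> 0 < L l /\ 0 < pstar l /\ 0 < Rs l.
  move=> l ls; have lx := sx l ls; have /andP[p0 _] := hp l lx.
  by split; [apply: hL | split; [|apply: hRs]].
have Cge0 : forall l, 0 <= Cxl Auth w x l by move=> l; apply: sumr_ge0 => k _; apply: hw.
have AV : forall q, attack_value Auth w x q =
    q x / 2 * \sum_(l in coauthors Auth x) Cxl Auth w x l * q l.
  move=> q; rewrite /attack_value.
  rewrite (@shapley_formula R n m Auth _ (fun k => w k * \prod_(i in Auth k) q i)) //.
    by rewrite ca_formula.
  by move=> S; rewrite rel_vFO.
have feas : feasible pstar L Rs x px B (greedy_profile pstar L x px B s).
  split => //; split.
    move=> j jx; apply: (@greedy_bounds R n pstar L s).
    - move=> l ls; have lx := sx l ls; have /andP[p0 p1] := hp l lx.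
      by split; [apply: hL | rewrite p0 p1].
    - exact: hB.
    - move=> i; rewrite /baseline; case: ifP => [_|/negbT ix]; first exact: hpx.
      by have /andP[p0 p1] := hp i ix; rewrite ltW.
  rewrite split [X in _ + X]big1 ?addr0; last first.
    move=> j /andP[jx jn]; rewrite gout //; last by rewrite hs.
    by rewrite /cost ltxx subrr mulr0.
  rewrite -sumS /greedy_profile; apply: greedy_cost => //.
split => // q [qx [qb qc]].
rewrite !AV gx qx; apply: ler_wpM2l.
  by rewrite divr_ge0 //; case/andP: hpx.
rewrite -!sumS -subr_le0 -sumrB.
under eq_bigr do rewrite -mulrBr.
pose M := \sum_(l <- s) Cxl Auth w x l / L l.
have M0 : 0 <= M.
  rewrite /M big_seq; apply: sumr_ge0 => l ls.
  by rewrite divr_ge0 // ltW //; case: (Hs l ls).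
have hM : forall l, l \in s -> Cxl Auth w x l / L l <= M.
  move=> l ls; rewrite /M (bigD1_seq l) //= lerDl big_seq_cond.
  apply: sumr_ge0 => i /andP[iS _].
  by rewrite divr_ge0 // ltW //; case: (Hs i iS).
have H : forall l, l \in s -> [/\ 0 < L l, 0 <= Cxl Auth w x l, 0 < pstar l,
    0 <= Rs l & 0 <= q l].
  move=> l ls; have [a [b c]] := Hs l ls.
  have lx := sx l ls; have /andP[q0 _] := qb l lx.
  by split => //; apply: ltW.
have [rho [r0 _ hr]] :=
  @key R n pstar L Rs (Cxl Auth w x) q s us srt H B (baseline pstar x px) M hB hbase M0 hM.
apply: le_trans hr _; rewrite mulr_ge0_le0 // subr_le0.
apply: le_trans qc; rewrite sumS split lerDl.
by apply: sumr_ge0 => j /andP[jx _]; apply: cost0.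
Qed.
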